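(* Let $S^{(1)}_{\rm tr},S^{(1)}_1,\dots,S^{(1)}_m$ be the output of Algorithm 1 and $S^{(2)}_{\rm tr},S^{(2)}_1,\dots,S^{(2)}_m$ the output of Algorithm 2 (both defined in the context). If every $f_i$ is monotone and submodular, then $$\max\Bigl\{\sum_{i=1}^m f_i\bigl(S^{(1)}_{\rm tr}\cup S^{(1)}_i\bigr),\;\sum_{i=1}^m f_i\bigl(S^{(2)}_{\rm tr}\cup S^{(2)}_i\bigr)\Bigr\}\;\ge\;0.53\cdot\mathrm{OPT}.$$ (That is, the Meta-Greedy algorithm, which runs Algorithms 1 and 2 and returns the solution with larger objective $\sum_i f_i(S_{\rm tr}\cup S_i)$, is $0.53$-approximate.)
   Context: $V$ is a finite ground set with $|V|=n$; $k,l$ are integers with $1\le l<k\le n$. For $i=1,\dots,m$, $f_i:2^V\to\mathbb{R}_{\ge 0}$ is a set function; $f_i$ is monotone if $A\subseteq B\Rightarrow f_i(A)\le f_i(B)$ and submodular if $f_i(A)+f_i(B)\ge f_i(A\cup B)+f_i(A\cap B)$ for all $A,B\subseteq V$. Write $\Delta_i(e\mid S)=f_i(S\cup\{e\})-f_i(S)$. Define $$\mathrm{OPT}=\max_{S_{\rm tr}\subseteq V,\,|S_{\rm tr}|\le l}\;\sum_{i=1}^m\;\max_{S_i\subseteq V,\,|S_i|\le k-l} f_i(S_{\rm tr}\cup S_i).$$ Algorithm 1: start with $S_{\rm tr}=S_1=\dots=S_m=\emptyset$. Phase 1: for $t=1,\dots,l$, choose $e^*\in\arg\max_{e\in V\setminus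 S_{\rm tr}}\sum_{i=1}^m\Delta_i(e\mid S_{\rm tr})$ and set $S_{\rm tr}\leftarrow S_{\rm tr}\cup\{e^*\}$. Phase 2: for $t=1,\dots,k-l$ and each $i$, choose $e_i^*\in\arg\max_{e\in V\setminus(S_{\rm tr}\cup S_i)}\Delta_i(e\mid S_{\rm tr}\cup S_i)$ and set $S_i\leftarrow S_i\cup\{e_i^*\}$. Algorithm 2: start with $S_{\rm tr}=S_1=\dots=S_m=\emptyset$. Phase 1: for each $i$ and $t=1,\dots,k-l$, choose $e_i^*\in\arg\max_{e\in V\setminus S_i}\Delta_i(e\mid S_i)$ and set $S_i\leftarrow S_i\cup\{e_i^*\}$. Phase 2: for $t=1,\dots,l$, choose $e^*\in\arg\max_{e\in V\setminus S_{\rm tr}}\sum_{i=1}^m\Delta_i(e\mid S_{\rm tr}\cup S_i)$ and set $S_{\rm tr}\leftarrow S_{\rm tr}\cup\{e^*\}$. Ties in all argmax's are broken arbitrarily. *)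

(* Defs.v *)
From HB Require Import structures.
From mathcomp Require Import all_boot all_order all_algebra.
Set Implicit Arguments. Unset Strict Implicit. Unset Printing Implicit Defensive.
Import Order.TTheory GRing.Theory Num.Theory.
Local Open Scope ring_scope.

Section Defs.
Variables (R : realFieldType) (V : finType).

Definition Delta (f : {set V} -> R) (S : {set V}) (e : V) : R :=
  f (e |: S) - f S.

Definition monotone (f : {set V} -> R) : Prop :=
  forall A B : {set V}, A \subset B -> f A <= f B.

Definition submodular (f : {set V} -> R) : Prop :=
  forall A B : {set V}, f (A :|: B) + f (A :&: B) <= f A + f B.

Definition nonneg (f : {set V} -> R) : Prop := forall A : {set V}, 0 <= f A.

(* [greedy_from B g s]: starting from the current set B, the elements of s
   are added one at a time, each being an argmax of [g cur] over the elements
   not in the current set cur (ties arbitrary). *)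
Fixpoint greedy_from (g : {set V} -> V -> R) (B : {set V}) (s : seq V) : bool :=
  match s with
  | [::] => true
  | e :: s' => [&& e \notin B,
                  [forall e', (e' \notin B) ==> (g B e' <= g B e)]
                & greedy_from g (e |: B) s']
  end.

Variable m : nat.
Variable f : 'I_m -> {set V} -> R.

(* Algorithm 1 possible output (S_tr, S_1..S_m) for some tie-breaking. *)
Definition alg1_output (l k : nat) (Str : {set V}) (S : 'I_m -> {set V}) : Prop :=
  exists (str : seq V) (si : 'I_m -> seq V),
    [/\ size str = l,
        greedy_from (fun T e => \sum_(i < m) Delta (f i) T e) set0 str
      & Str = [set x in str]] /\
    [/\ forall i, size (si i) = (k - l)%N,
        forall i, greedy_from (Delta (f i)) Str (si i)
      & forall i, S i = [set x in si i]].

(* Algorithm 2 possible output (S_tr, S_1..S_m) for some tie-breaking. *)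
Definition alg2_output (l k : nat) (Str : {set V}) (S : 'I_m -> {set V}) : Prop :=
  exists (str : seq V) (si : 'I_m -> seq V),
    [/\ forall i, size (si i) = (k - l)%N,
        forall i, greedy_from (Delta (f i)) set0 (si i)
      & forall i, S i = [set x in si i]] /\
    [/\ size str = l,
        greedy_from (fun T e => \sum_(i < m) Delta (f i) (T :|: S i) e) set0 str
      & Str = [set x in str]].

(* OPT = max_{|S_tr|<=l} sum_i max_{|S_i|<=k-l} f_i(S_tr u S_i)
   (maxima over nonempty finite families of nonnegative values, so
   using 0 as the neutral element of max is harmless). *)
Definition OPT (l k : nat) : R :=
  \big[Num.max/0]_(A : {set V} | (#|A| <= l)%N)
     \sum_(i < m) \big[Num.max/0]_(B : {set V} | (#|B| <= k - l)%N) f i (A :|: B).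

Definition objective (Str : {set V}) (S : 'I_m -> {set V}) : R :=
  \sum_(i < m) f i (Str :|: S i).

End Defs.

(* Main.v *)
From Stdlib Require Reals Lra.
Module RealPart.
Import Reals Lra.
Local Open Scope R_scope.

Lemma exp_pow_n (x:R) n : exp x ^ n = exp (INR n * x).
Proof.
  induction n as [|n IH]; simpl.
  - rewrite Rmult_0_l, exp_0; reflexivity.
  - rewrite IH, <- exp_plus. f_equal. destruct n; simpl; ring.
Qed.

Lemma sq_lb (b y : R) : 0 <= b -> b <= y -> b * b <= y ^ 2.
Proof. intros; simpl; nra. Qed.

Lemma e_lb : 100/37 <= exp 1.
Proof.
  assert (H1 : 129/128 <= exp (1/128)) by (pose proof (exp_ineq1_le (1/128)); lra).
  assert (H2 : (129/128)^128 <= exp (1/128) ^128) by (apply pow_incr; lra).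
  rewrite exp_pow_n in H2.
  replace (INR 128 * (1/128)) with 1 in H2 by (simpl; lra).
  replace 128%nat with (2*(2*(2*(2*(2*(2*2))))))%nat in H2 by reflexivity.
  rewrite !pow_mult in H2.
  set (y0 := 129/128) in H2.
  assert (A1 : 1.015686 <= y0^2) by (apply Rle_trans with (y0*y0); [unfold y0; lra| simpl; lra]).
  assert (A2 : 1.031618 <= (y0^2)^2) by (apply Rle_trans with (1.015686 * 1.015686); [lra| apply sq_lb; lra]).
  assert (A3 : 1.064235 <= ((y0^2)^2)^2) by (apply Rle_trans with (1.031618 * 1.031618); [lra| apply sq_lb; lra]).
  assert (A4 : 1.132596 <= (((y0^2)^2)^2)^2) by (apply Rle_trans with (1.064235 * 1.064235); [lra| apply sq_lb; lra]).
  assert (A5 : 1.282773 <= ((((y0^2)^2)^2)^2)^2) by (apply Rle_trans with (1.132596 * 1.132596); [lra| apply sq_lb; lra]).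
  assert (A6 : 1.645506 <= (((((y0^2)^2)^2)^2)^2)^2) by (apply Rle_trans with (1.282773 * 1.282773); [lra| apply sq_lb; lra]).
  assert (A7 : 2.707689 <= ((((((y0^2)^2)^2)^2)^2)^2)^2) by (apply Rle_trans with (1.645506 * 1.645506); [lra| apply sq_lb; lra]).
  lra.
Qed.

Lemma natbound (N : nat) : (1 <= N)%nat -> (100 * (N-1)^N <= 37 * N^N)%nat.
Proof.
  intros HN. apply INR_le.
  rewrite !mult_INR, !pow_INR, minus_INR by exact HN.
  assert (Hx : 1 <= INR N) by (apply (le_INR 1 N) in HN; simpl in HN; exact HN).
  change (INR 1) with 1.
  set (x := INR N) in *.
  assert (E : (x - 1) = x * (1 - 1/x)) by (field; lra).
  rewrite E, Rpow_mult_distr.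
  assert (B1 : 1 - 1/x <= exp (- (1/x))) by (pose proof (exp_ineq1_le (-(1/x))); lra).
  assert (B0 : 0 <= 1 - 1/x).
  { assert (1/x <= 1). { unfold Rdiv. rewrite Rmult_1_l. rewrite <- Rinv_1. apply Rinv_le_contravar; lra. } lra. }
  assert (B2 : (1 - 1/x)^N <= exp (-(1/x))^N) by (apply pow_incr; lra).
  rewrite exp_pow_n in B2. change (INR N) with x in B2.
  replace (x * - (1/x)) with (-1) in B2 by (field; lra).
  assert (B3 : exp (-1) * exp 1 = 1) by (rewrite <- exp_plus; replace (-1+1) with 0 by ring; apply exp_0).
  pose proof e_lb.
  assert (B4 : exp (-1) <= 37/100).
  { pose proof (exp_pos (-1)).
    assert (0 <= exp (-1) * (exp 1 - 100/37)) by (apply Rmult_le_pos; lra). lra. }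
  assert (Hp : 0 <= x^N) by (apply pow_le; lra).
  assert (I1 : INR 100 = 100) by (simpl; lra).
  assert (I2 : INR 37 = 37) by (simpl; lra).
  rewrite I1, I2.
  assert (B5 : (1 - 1/x)^N <= 37/100) by lra.
  apply Rle_trans with (100*(x^N*(37/100))).
  - apply Rmult_le_compat_l; [lra|]. apply Rmult_le_compat_l; lra.
  - lra.
Qed.
End RealPart.
From HB Require Import structures.
From mathcomp Require Import all_boot all_order all_algebra.
From mathcomp Require Import lra.
Require Import Defs.
Import Order.TTheory GRing.Theory Num.Theory.
Local Open Scope ring_scope.
Lemma powE (m n : nat) : Nat.pow m n = (m ^ n)%N.
Proof. elim: n => [//|n IH] /=; by rewrite expnS IH mulnE. Qed.
Lemma natbound' N : (0 < N)%N -> (100 * (N-1)^N <= 37 * N^N)%N.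
Proof.
move=> HN; have := RealPart.natbound N; rewrite !powE => H.
have H1 : (1 <= N)%coq_nat by apply/ssrnat.leP.
move/(_ H1): H => H; apply/ssrnat.leP; exact: H.
Qed.

Lemma pow37 (R : realFieldType) (N : nat) : (0 < N)%N ->
  (1 - (N%:R : R)^-1) ^+ N <= 37%:R / 100%:R.
Proof.
move=> HN.
have hN : (0 : R) < N%:R by rewrite ltr0n.
have E : 1 - (N%:R)^-1 = (N - 1)%:R / N%:R :> R.
  by rewrite natrB // mulrBl divff ?mul1r // gt_eqF.
rewrite E exprMn exprVn -!natrX.
have hp : (0 : R) < (N ^ N)%:R by rewrite ltr0n expn_gt0 HN.
rewrite ler_pdivrMr //.
have := natbound' N HN; rewrite -(ler_nat R) !natrM => H.
have h100 : (100%:R : R) = 100 by [].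
lra.
Qed.
Section Greedy.
Variables (R : realFieldType) (V : finType) (h : {set V} -> R).
Hypotheses (hmono : monotone h) (hsub : submodular h).
Implicit Types (S T O B : {set V}) (e : V) (s : seq V).

Lemma gain_ge0 S e : 0 <= h (e |: S) - h S.
Proof. by rewrite subr_ge0; apply: hmono; apply: subsetUr. Qed.

Lemma dimin S T O : S \subset T -> h (T :|: O) - h T <= h (S :|: O) - h S.
Proof.
move=> ST.
have h1 := hsub (S :|: O) T.
have e1 : (S :|: O) :|: T = T :|: O.
  by apply/setP => x; rewrite !inE; move/subsetP: ST => /(_ x); case: (x \in S); case: (x \in T); case: (x \in O) => //= ->.
have h2 : h S <= h ((S :|: O) :&: T).
  apply: hmono; apply/subsetP => x xS; rewrite !inE xS /=; by move/subsetP: ST => ->.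
rewrite e1 in h1; lra.
Qed.

Lemma sub_union S O : h (S :|: O) - h S <= \sum_(o in O) (h (o |: S) - h S).
Proof.
elim: {O}_.+1 {-2}O (ltnSn #|O|) => // n IH O.
case: (set_0Vmem O) => [->|[o oO]] HO.
  by rewrite setU0 subrr big_set0.
rewrite (big_setD1 o oO) /=.
have HO' : (#|O :\ o| < n)%N.
  by rewrite -ltnS; apply: leq_trans HO; rewrite ltnS (cardsD1 o O) oO.
have IH' := IH _ HO'.
have hs := hsub (o |: S) (S :|: (O :\ o)).
have e1 : (o |: S) :|: (S :|: (O :\ o)) = S :|: O.
  apply/setP => x; rewrite !inE; case: (eqVneq x o) => [->|] /=; first by rewrite oO !orbT.
  by rewrite orbA orbb.
have h2 : h S <= h ((o |: S) :&: (S :|: (O :\ o))).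
  apply: hmono; apply/subsetP => x xS; by rewrite !inE xS /= !orbT.
rewrite e1 in hs; lra.
Qed.

Lemma greedy_step S e O (K : nat) :
  (forall e', e' \notin S -> h (e' |: S) - h S <= h (e |: S) - h S) ->
  (#|O| <= K)%N -> h (S :|: O) - h S <= K%:R * (h (e |: S) - h S).
Proof.
move=> Hmax HK.
apply: le_trans (sub_union S O) _.
apply: le_trans (_ : \sum_(o in O) (h (e |: S) - h S) <= _).
  apply: ler_sum => o _.
  case: (boolP (o \in S)) => oS; last exact: Hmax.
  by rewrite (setUidPr (_ : [set o] \subset S)) ?sub1set // subrr gain_ge0.
rewrite sumr_const -[_ *+ #|O|]mulr_natl. apply: ler_wpM2r; first exact: gain_ge0.
by rewrite ler_nat.
Qed.

Variable g : {set V} -> V -> R.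
Hypothesis hg : forall T e, g T e = h (e |: T) - h T.

Lemma greedy_cons B e s :
  greedy_from g B (e :: s) ->
  [/\ e \notin B, (forall e', e' \notin B -> h (e' |: B) - h B <= h (e |: B) - h B)
    & greedy_from g (e |: B) s].
Proof.
move=> /= /and3P [eB /forallP Hm Hs]; split => // e' e'B.
by have := Hm e'; rewrite e'B /= !hg.
Qed.

Lemma setU_cons B e s : B :|: [set x in e :: s] = (e |: B) :|: [set x in s].
Proof. by apply/setP => x; rewrite !inE; case: (x == e); rewrite ?orbT. Qed.

Lemma greedy_ratio (K : nat) O : (0 < K)%N -> (#|O| <= K)%N ->
  forall s B W, greedy_from g B s -> W <= h (B :|: O) ->
  W - h (B :|: [set x in s]) <= (1 - (K%:R)^-1) ^+ size s * (W - h B).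
Proof.
move=> K0 HK; elim => [|e s IH] B W.
  move=> _ _; by rewrite expr0 mul1r (_ : [set x in [::]] = set0) ?setU0 //; apply/setP => x; rewrite !inE.
move=> /greedy_cons [eB Hm Hs] HW.
have HW' : W <= h ((e |: B) :|: O).
  apply: le_trans HW _; apply: hmono; apply: setSU; exact: subsetUr.
have := IH _ _ Hs HW'.
rewrite setU_cons /= exprS.
have st := @greedy_step _ _ O K Hm HK.
set q := (1 - (K%:R : R)^-1).
have Kp : (0 : R) < K%:R by rewrite ltr0n.
have q0 : 0 <= q.
  rewrite /q subr_ge0 invf_le1 //; by rewrite ler1n.
have qn0 : 0 <= q ^+ size s by apply: exprn_ge0.
have step : W - h (e |: B) <= q * (W - h B).
  have H : W - h B <= K%:R * (h (e |: B) - h B).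
    by apply: le_trans st; rewrite lerD2r.
  have H2 : (K%:R)^-1 * (W - h B) <= h (e |: B) - h B.
    by rewrite ler_pdivrMl.
  rewrite /q mulrBl mul1r; lra.
move=> H1; apply: le_trans H1 _.
by rewrite -mulrA mulrCA; apply: ler_wpM2l.
Qed.

Lemma greedy_D (K : nat) O : (#|O| <= K)%N ->
  forall s B, greedy_from g B s ->
  (size s)%:R * (h ((B :|: [set x in s]) :|: O) - h (B :|: [set x in s]))
    <= K%:R * (h (B :|: [set x in s]) - h B).
Proof.
move=> HK; elim => [|e s IH] B.
  by move=> _; rewrite mul0r (_ : [set x in [::]] = set0) ?setU0 ?subrr ?mulr0 //; apply/setP => x; rewrite !inE.
move=> /greedy_cons [eB Hm Hs].
have := IH _ Hs.
rewrite setU_cons /=.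
set T := (e |: B) :|: [set x in s].
have st := @greedy_step _ _ O K Hm HK.
have sub : B \subset T by apply/subsetP => x xB; rewrite !inE xB orbT.
have dm := @dimin _ _ O sub.
rewrite -addn1 natrD mulrDl mul1r => H.
have : K%:R * (h T - h B) = K%:R * (h T - h (e |: B)) + K%:R * (h (e |: B) - h B).
  by rewrite -mulrDr; congr (_ * _); rewrite addrA subrK.
move=> ->.
lra.
Qed.

End Greedy.
Section Helpers.
Variables (R : realFieldType) (V : finType) (m : nat).
Implicit Types (A B C T : {set V}).

Lemma monoU (h : {set V} -> R) C : monotone h -> monotone (fun T => h (T :|: C)).
Proof. by move=> hm A B AB; apply: hm; exact: setSU. Qed.

Lemma submodU (h : {set V} -> R) C : submodular h -> submodular (fun T => h (T :|: C)).
Proof.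
move=> hs A B /=; have := hs (A :|: C) (B :|: C).
have -> : (A :|: C) :|: (B :|: C) = (A :|: B) :|: C.
  by apply/setP => x; rewrite !inE; case: (x \in A); case: (x \in B); case: (x \in C).
have -> : (A :|: C) :&: (B :|: C) = (A :&: B) :|: C.
  by apply/setP => x; rewrite !inE; case: (x \in A); case: (x \in B); case: (x \in C).
by [].
Qed.

Lemma monoS (hs : 'I_m -> {set V} -> R) :
  (forall i, monotone (hs i)) -> monotone (fun T => \sum_(i < m) hs i T).
Proof. by move=> hm A B AB; apply: ler_sum => i _; apply: hm. Qed.

Lemma submodS (hs : 'I_m -> {set V} -> R) :
  (forall i, submodular (hs i)) -> submodular (fun T => \sum_(i < m) hs i T).
Proof.
move=> hm A B /=; rewrite -!big_split /=; apply: ler_sum => i _; exact: hm.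
Qed.

Lemma sum_lin (a b c : 'I_m -> R) (r : R) :
  (forall i, c i - r * (c i - b i) <= a i) ->
  \sum_(i < m) c i - r * (\sum_(i < m) c i - \sum_(i < m) b i) <= \sum_(i < m) a i.
Proof.
move=> H; apply: le_trans (ler_sum _ (fun i _ => H i)).
by rewrite sumrB -mulr_sumr sumrB.
Qed.

Lemma ratio_r (q r W a b : R) (n : nat) :
  0 <= q ^+ n -> q ^+ n <= r -> b <= W -> W - a <= q ^+ n * (W - b) ->
  W - r * (W - b) <= a.
Proof.
move=> q0 qr bW H.
have : q ^+ n * (W - b) <= r * (W - b) by apply: ler_wpM2r; rewrite ?subr_ge0.
lra.
Qed.

End Helpers.
Lemma pow61 (R : realFieldType) (N : nat) : (0 < N)%N ->
  (1 - ((2 * N)%N%:R : R)^-1) ^+ N <= 61%:R / 100%:R.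
Proof.
move=> HN.
have HN2 : (0 < 2 * N)%N by rewrite muln_gt0 HN.
have H := @pow37 R (2 * N)%N HN2.
rewrite exprM exprAC in H.
set y := (1 - _) ^+ N in H *.
have y0 : 0 <= y.
  rewrite /y exprn_ge0 // subr_ge0 invf_le1 ?ltr0n ?muln_gt0 ?HN // ler1n muln_gt0 HN.
  done.
rewrite expr2 in H.
have h37 : (37%:R / 100%:R : R) = 37 / 100 by [].
have h61 : (61%:R / 100%:R : R) = 61 / 100 by [].
rewrite h61; rewrite h37 in H.
have hp : (y - 61/100) * (y + 61/100) < 0.
  have -> : (y - 61/100) * (y + 61/100) = y * y - 61/100 * (61/100) :> R.
    by rewrite mulrDr !mulrBl; rewrite [61 / 100 * y]mulrC; rewrite addrA subrK.
  lra.
rewrite leNgt; apply/negP => hy; rewrite -/y in hy.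
have : 0 < (y - 61/100) * (y + 61/100).
  apply: mulr_gt0; lra.
lra.
Qed.

Lemma objective_ge0 (R : realFieldType) (V : finType) (m : nat)
  (f : 'I_m -> {set V} -> R) Str S :
  (forall i, nonneg (f i)) -> 0 <= objective f Str S.
Proof. by move=> hnn; apply: sumr_ge0 => i _; apply: hnn. Qed.

Theorem theorem1 (R : realFieldType) (V : finType) (m : nat)
  (f : 'I_m -> {set V} -> R) (l k : nat)
  (hl : (1 <= l)%N) (hlk : (l < k)%N) (hkn : (k <= #|V|)%N)
  (hnn : forall i, nonneg (f i))
  (hmono : forall i, monotone (f i))
  (hsub : forall i, submodular (f i))
  (Str1 : {set V}) (S1 : 'I_m -> {set V})
  (Str2 : {set V}) (S2 : 'I_m -> {set V}) :
  alg1_output f l k Str1 S1 ->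
  alg2_output f l k Str2 S2 ->
  Num.max (objective f Str1 S1) (objective f Str2 S2)
    >= (53%:R / 100%:R) * OPT f l k.
Proof.
move=> [str1 [si1 [[hs1 hg1 hS1] [hsi1 hgi1 hSi1]]]]
       [str2 [si2 [[hsi2 hgi2 hSi2] [hs2 hg2 hS2]]]].
set s := (k - l)%N.
have s0 : (0 < s)%N by rewrite subn_gt0.
have l0 : (0 < l)%N by [].
set t := Num.max _ _.
have tA1 : objective f Str1 S1 <= t by rewrite le_max lexx.
have tA2 : objective f Str2 S2 <= t by rewrite le_max lexx orbT.
have t0 : 0 <= t by apply: (le_trans _ tA1); apply: objective_ge0.
suff core : forall (Otr : {set V}) (O : 'I_m -> {set V}), (#|Otr| <= l)%N -> (forall i, (#|O i| <= s)%N) ->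
   53%:R/100%:R * \sum_(i < m) f i (Otr :|: O i) <= t.
  rewrite /OPT.
  have hu : \big[Num.max/0]_(A : {set V} | (#|A| <= l)%N)
      \sum_(i < m) \big[Num.max/0]_(B : {set V} | (#|B| <= k - l)%N) f i (A :|: B)
      <= 100%:R/53%:R * t.
    apply: bigmax_le; first by apply: mulr_ge0; [apply: divr_ge0; apply: ler0n | exact: t0].
    move=> A hA.
    have hex : forall i, {B : {set V} | (#|B| <= s)%N &
       \big[Num.max/0]_(X : {set V} | (#|X| <= k - l)%N) f i (A :|: X) = f i (A :|: B)}.
      move=> i.
      have h1 : (#|(set0 : {set V})| <= k - l)%N by rewrite cards0.
      have h2 : forall B : {set V}, (#|B| <= k - l)%N -> 0 <= f i (A :|: B).
        by move=> B _; apply: hnn.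
      have [B hB e] := @eq_bigmax _ _ _ 0 set0 (fun B : {set V} => (#|B| <= k - l)%N)
                          (fun B => f i (A :|: B)) h1 h2.
      by exists B.
    rewrite (eq_bigr (fun i => f i (A :|: s2val (hex i)))); last first.
      by move=> i _; case: (hex i).
    have := core A (fun i => s2val (hex i)) hA (fun i => s2valP (hex i)).
    move=> H.
    have h53 : (53%:R / 100%:R : R) = 53/100 by [].
    have h100 : (100%:R / 53%:R : R) = 100/53 by [].
    lra.
  have h53 : (53%:R / 100%:R : R) = 53/100 by [].
  have h100 : (100%:R / 53%:R : R) = 100/53 by [].
  lra.
move=> Otr O hOtr hO.
pose F := fun T : {set V} => \sum_(i < m) f i T.
have Fmono : monotone F by apply: monoS.
have Fsub : submodular F by apply: submodS.
pose H := fun T : {set V} => \sum_(i < m) f i (T :|: S2 i).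
have Hmono : monotone H.
  by apply: (@monoS R V m (fun i T => f i (T :|: S2 i))) => i; apply: monoU.
have Hsub : submodular H.
  by apply: (@submodS R V m (fun i T => f i (T :|: S2 i))) => i; apply: submodU.
have F0 : 0 <= F set0 by apply: sumr_ge0 => i _; apply: hnn.
have hgF : forall T e, (fun (T : {set V}) (e : V) => \sum_(i < m) Delta (f i) T e) T e = F (e |: T) - F T.
  by move=> T e; rewrite /= /Delta sumrB.
have hgH : forall T e, (fun (T : {set V}) (e : V) => \sum_(i < m) Delta (f i) (T :|: S2 i) e) T e = H (e |: T) - H T.
  by move=> T e; rewrite /= /Delta /H sumrB; congr (_ - _); apply: eq_bigr => i _; rewrite setUA.
have fact1 : F (Str1 :|: Otr) - F Str1 <= F Str1.
  have := greedy_D _ _ _ Fmono Fsub _ hgF l Otr hOtr _ _ hg1.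
  rewrite set0U -hS1 hs1 ler_pM2l ?ltr0n //; lra.
have fact2 : \sum_(i < m) f i (Otr :|: O i) <=
    \sum_(i < m) f i (Str1 :|: O i) + (F (Str1 :|: Otr) - F Str1).
  rewrite /F -sumrB -big_split /=; apply: ler_sum => i _.
  have d := dimin _ _ _ (hmono i) (hsub i) _ _ Otr (subsetUl Str1 (O i)).
  have : f i (Otr :|: O i) <= f i (Str1 :|: O i :|: Otr).
    apply: hmono; apply/subsetP => x; rewrite !inE; by case/orP => ->; rewrite ?orbT.
  lra.
have hgD : forall i T e, Delta (f i) T e = f i (e |: T) - f i T by [].
have fact3 : \sum_(i < m) f i (Str1 :|: O i)
    - 37%:R/100%:R * (\sum_(i < m) f i (Str1 :|: O i) - F Str1) <= objective f Str1 S1.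
  rewrite /objective /F; apply: sum_lin => i.
  have G := greedy_ratio _ _ _ (hmono i) (hsub i) _ (hgD i) s (O i) s0 (hO i) _ _
     (f i (Str1 :|: O i)) (hgi1 i) (lexx _).
  rewrite hsi1 -hSi1 in G.
  apply: (@ratio_r R _ _ _ _ _ _ _ (pow37 R s s0) _ G).
    by apply: exprn_ge0; rewrite subr_ge0 invf_le1 ?ltr0n // ler1n.
  by apply: hmono; apply: subsetUl.
have fact4 : \sum_(i < m) (f i (S2 i :|: O i) - f i (S2 i)) <= \sum_(i < m) f i (S2 i).
  apply: ler_sum => i _.
  have G := greedy_D _ _ _ (hmono i) (hsub i) _ (hgD i) s (O i) (hO i) _ _ (hgi2 i).
  rewrite set0U -hSi2 hsi2 ler_pM2l ?ltr0n // in G.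
  have := hnn i set0; lra.
have fact5 : \sum_(i < m) f i (Otr :|: O i) <=
    H Otr + \sum_(i < m) (f i (S2 i :|: O i) - f i (S2 i)).
  rewrite /H -big_split /=; apply: ler_sum => i _.
  have d := dimin _ _ _ (hmono i) (hsub i) _ _ (O i) (subsetUr Otr (S2 i)).
  have : f i (Otr :|: O i) <= f i (Otr :|: S2 i :|: O i).
    apply: hmono; apply/subsetP => x; rewrite !inE; by case/orP => ->; rewrite ?orbT.
  lra.
have HG0 : H set0 = \sum_(i < m) f i (S2 i) by apply: eq_bigr => i _; rewrite set0U.
have objH : objective f Str2 S2 = H Str2 by [].
have fact6 : H Otr - 37%:R/100%:R * (H Otr - \sum_(i < m) f i (S2 i)) <= objective f Str2 S2.
  have W0 : H Otr <= H (set0 :|: Otr) by rewrite set0U.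
  have G := greedy_ratio _ _ _ Hmono Hsub _ hgH l Otr l0 hOtr _ _ (H Otr) hg2 W0.
  rewrite set0U -hS2 hs2 -objH HG0 in G.
  apply: (@ratio_r R _ _ _ _ _ _ _ (pow37 R l l0) _ G).
    by apply: exprn_ge0; rewrite subr_ge0 invf_le1 ?ltr0n // ler1n.
  by rewrite -HG0; apply: Hmono; apply: sub0set.
have fact7 : F (Str1 :|: Otr) <= H (Otr :|: Str1).
  apply: ler_sum => i _; apply: hmono.
  apply/subsetP => x; rewrite !inE; by case/orP => ->; rewrite ?orbT.
have hO8 : (#|Otr :|: Str1| <= 2 * l)%N.
  apply: leq_trans (leq_card_setU Otr Str1).1 _.
  have : (#|Str1| <= l)%N by rewrite hS1 cardsE -hs1 card_size.
  rewrite mul2n -addnn; move=> h; exact: leq_add.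
have l20 : (0 < 2 * l)%N by rewrite muln_gt0.
have fact8 : H (Otr :|: Str1) - 61%:R/100%:R * (H (Otr :|: Str1) - \sum_(i < m) f i (S2 i))
    <= objective f Str2 S2.
  have W0 : H (Otr :|: Str1) <= H (set0 :|: (Otr :|: Str1)) by rewrite set0U.
  have G := greedy_ratio _ _ _ Hmono Hsub _ hgH (2 * l) _ l20 hO8 _ _ _ hg2 W0.
  rewrite set0U -hS2 hs2 -objH HG0 in G.
  apply: (@ratio_r R _ _ _ _ _ _ _ (pow61 R l l0) _ G).
    by apply: exprn_ge0; rewrite subr_ge0 invf_le1 ?ltr0n // ler1n.
  by rewrite -HG0; apply: Hmono; apply: sub0set.
lra.
Qed.
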